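(* Let $X$ be a compact metric space and $f\colon X\to X$ a homeomorphism with the L-shadowing property. Then $f$ has the shadowing property and admits only finitely many chain recurrent classes.
   Context: A $\delta$-pseudo orbit is $(x_k)_{k\in\mathbb{Z}}$ with $d(f(x_k),x_{k+1})<\delta$ for all $k$; a two-sided limit pseudo orbit satisfies $d(f(x_k),x_{k+1})\to0$ as $|k|\to\infty$. $z$ $\varepsilon$-shadows $(x_k)$ if $d(f^k(z),x_k)<\varepsilon$ for all $k$, and two-sided limit shadows it if $d(f^k(z),x_k)\to0$ as $|k|\to\infty$. $f$ has the L-shadowing property if for every $\varepsilon>0$ there is $\delta>0$ such that every $\delta$-pseudo orbit that is also a two-sided limit pseudo orbit is both $\varepsilon$-shadowed and two-sided limit shadowed by one and the same point. $f$ has the shadowing property if for every $\varepsilon>0$ there is $\delta>0$ such that every $\delta$-pseudo orbit is $\varepsilon$-shadowed by some point. A point $x$ is chain recurrent if for each $\varepsilon>0$ there is a nontrivial finite $\varepsilon$-pseudo orbit from $x$ to $x$; the chain recurrent class of $x$ is the set of $y$ such that for every $\varepsilon>0$ some periodic $\varepsilon$-pseudo orbit contains both $x$ and $y$. *)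

(* Defs.v *)
(* A compact metric space is a
   [metricType R] (R : realType) whose full set is compact; the distance is
   [mdist]. *)
From HB Require Import structures.
From mathcomp Require Import all_boot all_order all_algebra.
From mathcomp Require Import all_classical all_reals all_analysis.
Set Implicit Arguments. Unset Strict Implicit. Unset Printing Implicit Defensive.
Import Order.TTheory GRing.Theory Num.Theory.
Local Open Scope classical_set_scope.
Local Open Scope ring_scope.

Section Dyn.
Context {R : realType} {X : metricType R}.
Implicit Types (f : X -> X) (xs : int -> X).

Definition homeomorphism f : Prop :=
  exists g : X -> X, [/\ cancel f g, cancel g f, continuous f & continuous g].

Definition is_orbit f (y : int -> X) : Prop := forall k : int, y (k + 1) = f (y k).

Definition pseudo_orbit f (delta : R) xs : Prop :=
  forall k : int, mdist (f (xs k)) (xs (k + 1)) < delta.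

Definition limit_pseudo_orbit f xs : Prop :=
  forall e : R, 0 < e -> exists N : nat, forall k : int,
    (N <= absz k)%N -> mdist (f (xs k)) (xs (k + 1)) < e.

Definition eps_shadows f (eps : R) (z : X) xs : Prop :=
  exists y, [/\ is_orbit f y, y 0 = z & forall k : int, mdist (y k) (xs k) < eps].

Definition limit_shadows f (z : X) xs : Prop :=
  exists y, [/\ is_orbit f y, y 0 = z &
    forall e : R, 0 < e -> exists N : nat, forall k : int,
      (N <= absz k)%N -> mdist (y k) (xs k) < e].

Definition L_shadowing f : Prop :=
  forall eps : R, 0 < eps -> exists2 delta : R, 0 < delta &
    forall xs, pseudo_orbit f delta xs -> limit_pseudo_orbit f xs ->
      exists z : X, eps_shadows f eps z xs /\ limit_shadows f z xs.

Definition shadowing f : Prop :=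
  forall eps : R, 0 < eps -> exists2 delta : R, 0 < delta &
    forall xs, pseudo_orbit f delta xs -> exists z : X, eps_shadows f eps z xs.

Definition chain_recurrent f (x : X) : Prop :=
  forall eps : R, 0 < eps -> exists n : nat, exists s : nat -> X,
    [/\ (0 < n)%N, s 0%N = x, s n = x &
        forall i : nat, (i < n)%N -> mdist (f (s i)) (s i.+1) < eps].

Definition chain_recurrent_set f : set X := [set x | chain_recurrent f x].

Definition periodic_pseudo_orbit f (eps : R) xs : Prop :=
  pseudo_orbit f eps xs /\
  exists p : nat, (0 < p)%N /\ forall k : int, xs (k + p%:Z) = xs k.

Definition chain_recurrent_class f (x : X) : set X :=
  [set y | forall eps : R, 0 < eps -> exists xs,
     periodic_pseudo_orbit f eps xs /\
     (exists i : int, xs i = x) /\ (exists j : int, xs j = y)].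

End Dyn.

(* Main.v *)
Require Import Defs.
From HB Require Import structures.
From mathcomp Require Import all_boot all_order all_algebra.
From mathcomp Require Import all_classical all_reals all_analysis.
From mathcomp Require Import zify.
Set Implicit Arguments. Unset Strict Implicit. Unset Printing Implicit Defensive.
Import Order.TTheory GRing.Theory Num.Theory.
Local Open Scope classical_set_scope.
Local Open Scope ring_scope.
From mathcomp Require Import lra intdiv.
Section A.
Context {R : realType} {X : metricType R}.

Lemma cont_eps (h : X -> X) : continuous h -> forall x (e : R), 0 < e ->
  exists2 r : R, 0 < r & forall y, mdist x y < r -> mdist (h x) (h y) < e.
Proof.
move=> hc x e e0.
have H := metricType_numDomainType.cvgr_dist_lt (hc x) e0.
have [r r0 hr] := (metricType_numDomainType.nbhs_mdistP x (fun t => mdist (h x) (h t) < e)).1 (H _).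
exists r => // y xy; exact: hr.
Qed.

Lemma cluster_seq (u : nat -> X) : compact [set: X] ->
  exists p, forall r : R, 0 < r -> forall N, exists n, (N <= n)%N /\ mdist p (u n) < r.
Proof.
move=> cpt.
have [p [_ cp]] := cpt (u @ \oo) _ (filterT).
exists p => r r0 N.
have A : (u @ \oo) [set x | exists n, (N <= n)%N /\ x = u n].
  by apply: filterS (nbhs_infty_ge N) => n Nn; exists n.
have [x [[n [Nn ->]] B]] := cp _ _ A (nbhsx_ballx p _ r0).
by exists n; split => //; move: B; rewrite ballEmdist.
Qed.

Lemma iter_cont (h : X -> X) n : continuous h -> continuous (iter n h).
Proof.
move=> hc; elim: n => [|n IH] x /=; first exact: cvg_id.
exact: (continuous_comp (IH x) (hc _)).
Qed.

Variables (f g : X -> X).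
Hypotheses (fg : cancel f g) (gf : cancel g f).

Definition orb (x : X) (k : int) : X :=
  match k with Posz n => iter n f x | Negz n => iter n.+1 g x end.

Lemma orb0 x : orb x 0 = x. Proof. by []. Qed.

Lemma orbS x k : orb x (k + 1) = f (orb x k).
Proof.
case: k => [n|[|n]].
- by have -> : Posz n + 1 = Posz n.+1 by lia.
- have -> : Negz 0 + 1 = 0 by lia.
  by rewrite /= gf.
- have -> : Negz n.+1 + 1 = Negz n by lia.
  by rewrite /= gf.
Qed.

Lemma orb_orbit x : is_orbit f (orb x).
Proof. by move=> k; rewrite orbS. Qed.

Lemma orbit_uniq y : is_orbit f y -> forall k, y k = orb (y 0) k.
Proof.
move=> oy.
have back k : y k = g (y (k + 1)) by rewrite oy fg.
case=> n.
- elim: n => [//|n IH].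
  have -> : Posz n.+1 = Posz n + 1 by lia.
  by rewrite oy IH orbS.
- elim: n => [|n IH].
    rewrite back; have -> : Negz 0 + 1 = 0 by lia.
    by [].
  rewrite back; have -> : Negz n.+1 + 1 = Negz n by lia.
  by rewrite IH.
Qed.

Lemma orb_cont k : continuous f -> continuous g -> continuous (orb ^~ k).
Proof.
move=> cf cg; case: k => n.
  by have := iter_cont (n:=n) cf.
by have := iter_cont (n:=n.+1) cg.
Qed.

Definition clamp (n : nat) (k : int) : int :=
  if k < - n%:Z then - n%:Z else if n%:Z < k then n%:Z else k.

Lemma clamp_cases n k : (clamp n k = k /\ clamp n (k+1) = k+1) \/ clamp n (k+1) = clamp n k.
Proof. rewrite /clamp; repeat case: ifP => ?; lia. Qed.

Lemma clamp_far n k : (n.+1 <= absz k)%N -> clamp n (k+1) = clamp n k.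
Proof. move=> h; rewrite /clamp; repeat case: ifP => ?; lia. Qed.

Lemma clamp_in n k : (absz k <= n)%N -> clamp n k = k.
Proof. move=> h; rewrite /clamp; repeat case: ifP => ?; lia. Qed.

Definition tr (xs : int -> X) n k := orb (xs (clamp n k)) (k - clamp n k).

Lemma tr_step xs n k : (tr xs n k = xs k /\ tr xs n (k+1) = xs (k+1)) \/ tr xs n (k+1) = f (tr xs n k).
Proof.
rewrite /tr; case: (clamp_cases n k) => [[-> ->]|->].
  by left; rewrite !subrr.
by right; rewrite -orbS; congr orb; lia.
Qed.

Lemma tr_pseudo xs d n : 0 < d -> pseudo_orbit f d xs -> pseudo_orbit f d (tr xs n).
Proof.
move=> d0 pxs k; case: (tr_step xs n k) => [[-> ->]|->]; first exact: pxs.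
by rewrite mdistxx.
Qed.

Lemma tr_limit xs n : limit_pseudo_orbit f (tr xs n).
Proof.
move=> e e0; exists n.+1 => k kn.
rewrite /tr clamp_far //.
by rewrite (_ : k + 1 - _ = (k - clamp n k) + 1) ?orbS ?mdistxx //; lia.
Qed.

Lemma tr_eq xs n k : (absz k <= n)%N -> tr xs n k = xs k.
Proof. by move=> h; rewrite /tr clamp_in // subrr. Qed.

Lemma Lsh_sh : compact [set: X] -> continuous f -> continuous g ->
  L_shadowing f -> shadowing f.
Proof.
move=> cpt cf cg Lsh eps e0.
have [d d0 Hd] := Lsh (eps/2) (divr_gt0 e0 (ltr0Sn _ 1)).
exists d => // xs pxs.
have : forall n, exists z, eps_shadows f (eps/2) z (tr xs n).
  move=> n; have [z [hz _]] := Hd _ (tr_pseudo n d0 pxs) (tr_limit xs n).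
  by exists z.
move=> /choice [z hz].
have [p hp] := cluster_seq z cpt.
exists p, (orb p); split => //; first exact: orb_orbit.
move=> k.
have [r r0 hr] := cont_eps (orb_cont (k:=k) cf cg) p (divr_gt0 e0 (ltr0Sn _ 1)).
have [n [kn pn]] := hp r r0 (absz k).
have [y [oy y0 hy]] := hz n.
have := hy k; rewrite (orbit_uniq oy) y0 tr_eq // => h2.
have h1 := hr _ pn.
apply: le_lt_trans (metric_triangle _ (orb (z n) k) _) _.
by rewrite (splitr eps) ltrD.
Qed.
End A.

Lemma modS_cases (k : int) (P : nat) : (0 < P)%N ->
  ((k %% P%:Z)%Z + 1 < P%:Z /\ ((k+1) %% P%:Z)%Z = (k %% P%:Z)%Z + 1) \/
  ((k %% P%:Z)%Z + 1 = P%:Z /\ ((k+1) %% P%:Z)%Z = 0).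
Proof.
move=> P0.
have e : ((k+1) %% P%:Z)%Z = (((k %% P%:Z)%Z + 1) %% P%:Z)%Z by rewrite modzDml.
have h0 : (0 <= (k %% P%:Z)%Z) by apply: modz_ge0; lia.
have h1 : ((k %% P%:Z)%Z < P%:Z) by apply: ltz_pmod; lia.
case: (ltP ((k %% P%:Z)%Z + 1) P%:Z) => h.
  by left; split => //; rewrite e modz_small //; apply/andP; split => //; lia.
have h2 : (k %% P%:Z)%Z + 1 = P%:Z by lia.
by right; split => //; rewrite e h2 modzz.
Qed.

Section B.
Context {R : realType} {X : metricType R}.
Variables (f g : X -> X).
Hypotheses (fg : cancel f g) (gf : cancel g f).

Definition chainR (e : R) (a b : X) := exists n (s : nat -> X),
  [/\ (0 < n)%N, s 0%N = a, s n = b &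
      forall i, (i < n)%N -> mdist (f (s i)) (s i.+1) < e].

Definition catf (n : nat) (s t : nat -> X) (i : nat) :=
  if (i <= n)%N then s i else t (i - n)%N.

Lemma catf_err e n m s t : s n = t 0%N ->
  (forall i, (i < n)%N -> mdist (f (s i)) (s i.+1) < e) ->
  (forall i, (i < m)%N -> mdist (f (t i)) (t i.+1) < e) ->
  forall i, (i < n + m)%N -> mdist (f (catf n s t i)) (catf n s t i.+1) < e.
Proof.
move=> snt hs ht i hi; rewrite /catf.
case: (ltnP i n) => hin.
  by rewrite (ltnW hin); apply: hs.
have -> : (if (i <= n)%N then s i else t (i - n)%N) = t (i - n)%N.
  case: ifP => // h; have -> : i = n by lia.
  by rewrite snt subnn.
rewrite subSn //; apply: ht; lia.
Qed.

Lemma chain_trans e a b c : chainR e a b -> chainR e b c -> chainR e a c.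
Proof.
move=> [n [s [n0 s0 sn hs]]] [m [t [m0 t0 tm ht]]].
exists (n + m)%N, (catf n s t); split.
- lia.
- by rewrite /catf leq0n.
- rewrite /catf; case: ifP => h; first lia.
  by rewrite addKn.
- by apply: catf_err => //; rewrite sn t0.
Qed.

Lemma chain_from e a b : 0 < e -> chain_recurrent_class f a b -> chainR e a b.
Proof.
move=> e0 /(_ e e0) [xs [[pxs [p [p0 hp]]] [[i xi] [j xj]]]].
have per : forall t : nat, forall k, xs (k + (p * t)%N%:Z) = xs k.
  elim=> [|t IH] k; first by rewrite muln0 addr0.
  by rewrite mulnSr PoszD addrA hp IH.
pose q := (p * (absz (j - i)).+1)%N.
have hq : ((absz (j - i)).+1 <= q)%N by rewrite /q leq_pmull.
pose n := absz (j - i + q%:Z).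
exists n, (fun l => xs (i + l%:Z)); split.
- rewrite /n; lia.
- by rewrite addr0.
- have -> : i + n%:Z = j + q%:Z by rewrite /n; lia.
  by rewrite per.
- move=> l _; have -> : i + (l.+1)%:Z = (i + l%:Z) + 1 by lia.
  exact: pxs.
Qed.

Lemma chain_to a b : (forall e, 0 < e -> chainR e a b /\ chainR e b a) ->
  chain_recurrent_class f a b.
Proof.
move=> H e e0; have [[n [s [n0 s0 sn hs]]] [m [t [m0 t0 tm ht]]]] := H e e0.
pose P := (n + m)%N; pose c := catf n s t.
have cerr := catf_err (m:=m) (etrans sn (esym t0)) hs ht.
have c0 : c 0%N = a by rewrite /c /catf leq0n.
have cP : c P = a.
  rewrite /c /catf /P; case: ifP => h; first lia.
  by rewrite addKn.
have cn : c n = b by rewrite /c /catf leqnn.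
have P0 : (0 < P)%N by rewrite /P; lia.
exists (fun k => c (absz (k %% P%:Z)%Z)); split; [split|split].
- move=> k.
  have h0 : (0 <= (k %% P%:Z)%Z) by apply: modz_ge0; lia.
  have h1 : ((k %% P%:Z)%Z < P%:Z) by apply: ltz_pmod; lia.
  case: (modS_cases k P0) => [[h2 ->]|[h2 ->]].
    have -> : absz ((k %% P%:Z)%Z + 1) = (absz (k %% P%:Z)%Z).+1 by lia.
    by apply: cerr; lia.
  have := cerr (absz (k %% P%:Z)%Z); rewrite /= c0.
  have -> : (absz (k %% P%:Z)%Z).+1 = P by lia.
  by rewrite -/c cP; apply; lia.
- exists P; split => // k.
  by rewrite modzDr.
- by exists 0; rewrite mod0z.
- exists n%:Z; rewrite modz_small; last by apply/andP; split; lia.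
  by [].
Qed.

Lemma class_eq a b : (forall e, 0 < e -> chainR e a b /\ chainR e b a) ->
  chain_recurrent_class f a = chain_recurrent_class f b.
Proof.
move=> H.
have Hs : forall e, 0 < e -> chainR e b a /\ chainR e a b.
  by move=> e e0; have [] := H e e0.
have gen : forall u v, (forall e, 0 < e -> chainR e u v /\ chainR e v u) ->
    chain_recurrent_class f u `<=` chain_recurrent_class f v.
  move=> u v Huv z hz; apply: chain_to => e e0.
  have zc1 := chain_from e0 hz.
  have hz' : chain_recurrent_class f z u.
    move=> e' e'0; have [xs [hx [hi hj]]] := hz e' e'0.
    by exists xs.
  have zc2 := chain_from e0 hz'.
  have [h1 h2] := Huv e e0.
  split; [exact: chain_trans h2 zc1 | exact: chain_trans zc2 h1].
by apply/seteqP; split; apply: gen.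
Qed.
End B.

Fixpoint blk (L : nat -> nat) (p : nat) : nat * nat :=
  match p with
  | 0 => (0, 0)
  | p'.+1 => let (m, o) := blk L p' in if (o.+1 < L m)%N then (m, o.+1) else (m.+1, 0)
  end%N.

Fixpoint Ssum (L : nat -> nat) (m : nat) : nat :=
  match m with 0 => 0 | m'.+1 => Ssum L m' + L m' end%N.

Section Blk.
Variable L : nat -> nat.
Hypothesis hL : forall m, (0 < L m)%N.

Lemma blk_inv p : ((blk L p).2 < L (blk L p).1)%N.
Proof.
elim: p => [|p IH] /=; first exact: hL.
case: (blk L p) IH => m o /= IH; case: ifP => //= _; exact: hL.
Qed.

Lemma blk_step p : (blk L p.+1).1 = (blk L p).1 \/ (blk L p.+1).1 = (blk L p).1.+1.
Proof. by rewrite /=; case: (blk L p) => m o; case: ifP => _; [left|right]. Qed.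

Lemma blk_mono p d : ((blk L p).1 <= (blk L (p + d)).1)%N.
Proof.
elim: d => [|d IH]; first by rewrite addn0.
rewrite addnS; case: (blk_step (p + d)) => ->; lia.
Qed.

Lemma blk_S m : blk L (Ssum L m) = (m, 0%N).
Proof.
elim: m => [//|m IH].
have A : forall o, (o < L m)%N -> blk L (Ssum L m + o) = (m, o).
  elim=> [|o IHo] h; first by rewrite addn0.
  by rewrite addnS /= IHo ?h //; lia.
rewrite /= -(prednK (hL m)) addnS /= A; last by rewrite prednK ?hL //; lia.
by rewrite prednK ?hL // ltnn.
Qed.

Lemma Ssum_ge m : (m <= Ssum L m)%N.
Proof. elim: m => [//|m IH] /=; have := hL m; lia. Qed.

Lemma blk_large M p : (Ssum L M <= p)%N -> (M <= (blk L p).1)%N.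
Proof.
move=> h; have := blk_mono (Ssum L M) (p - Ssum L M).
by rewrite subnKC // blk_S.
Qed.
End Blk.

Section Chains.
Context {R : realType} {X : metricType R}.

Definition Fw (L : nat -> nat) (c : nat -> nat -> X) p := c (blk L p).1 (blk L p).2.
Definition Bw (L : nat -> nat) (c : nat -> nat -> X) p := c (blk L p).1 (L (blk L p).1 - (blk L p).2)%N.

Lemma Fw_err (f : X -> X) x L c (r : nat -> R) :
  (forall m, (0 < L m)%N) -> (forall m, c m 0%N = x) -> (forall m, c m (L m) = x) ->
  (forall m i, (i < L m)%N -> mdist (f (c m i)) (c m i.+1) < r m) ->
  forall p, mdist (f (Fw L c p)) (Fw L c p.+1) < r (blk L p).1.
Proof.
move=> hL c0 cL hc p; rewrite /Fw /=.
have := blk_inv hL p; case: (blk L p) => m o /= h.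
case: ifP => h2 /=; first exact: hc.
rewrite c0 -(cL m); have -> : L m = o.+1 by lia.
exact: hc.
Qed.

Lemma Bw_err (f : X -> X) x L c (r : nat -> R) :
  (forall m, (0 < L m)%N) -> (forall m, c m 0%N = x) -> (forall m, c m (L m) = x) ->
  (forall m i, (i < L m)%N -> mdist (f (c m i)) (c m i.+1) < r m) ->
  forall p, mdist (f (Bw L c p.+1)) (Bw L c p) < r (blk L p).1.
Proof.
move=> hL c0 cL hc p; rewrite /Bw /=.
have := blk_inv hL p; case: (blk L p) => m o /= h.
case: ifP => h2 /=.
  have -> : (L m - o = (L m - o.+1).+1)%N by lia.
  by apply: hc; lia.
rewrite subn0 cL -(c0 m); have -> : (L m - o = 1)%N by lia.
by apply: hc; lia.
Qed.

Lemma Fw_hit x L c m : (forall m, (0 < L m)%N) -> (forall m, c m 0%N = x) ->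
  Fw L c (Ssum L m) = x.
Proof. by move=> hL c0; rewrite /Fw blk_S. Qed.

Lemma Bw_hit x L c m : (forall m, (0 < L m)%N) -> (forall m, c m (L m) = x) ->
  Bw L c (Ssum L m) = x.
Proof. by move=> hL cL; rewrite /Bw blk_S //= subn0. Qed.

End Chains.

Section KL.
Context {R : realType} {X : metricType R}.

Lemma KL (f : X -> X) (cf : continuous f) (d : R) (d0 : 0 < d)
  (Hd : forall xs, pseudo_orbit f d xs -> limit_pseudo_orbit f xs ->
     exists z, limit_shadows f z xs) x y :
  chain_recurrent f x -> chain_recurrent f y -> mdist x y < d / 2 ->
  forall e, 0 < e -> chainR f e x y.
Proof.
move=> crx cry dxy e e0.
pose r := fun m : nat => d / 2 / (m.+1)%:R.
have r0 : forall m, 0 < r m by move=> m; rewrite /r !divr_gt0.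
have rle : forall m, r m <= d / 2.
  by move=> m; rewrite /r ler_pdivrMr // ler_peMr ?ler1n // divr_ge0 // ltW.
have getc : forall z, chain_recurrent f z -> exists Lc : (nat -> nat) * (nat -> nat -> X),
    [/\ forall m, (0 < Lc.1 m)%N, forall m, Lc.2 m 0%N = z, forall m, Lc.2 m (Lc.1 m) = z &
        forall m i, (i < Lc.1 m)%N -> mdist (f (Lc.2 m i)) (Lc.2 m i.+1) < r m].
  move=> z crz.
  have : forall m, exists lc : nat * (nat -> X), [/\ (0 < lc.1)%N, lc.2 0%N = z, lc.2 lc.1 = z &
       forall i, (i < lc.1)%N -> mdist (f (lc.2 i)) (lc.2 i.+1) < r m].
    by move=> m; have [n [s hs]] := crz (r m) (r0 m); exists (n, s).
  move=> /choice [F hF]; exists (fun m => (F m).1, fun m => (F m).2).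
  by split => m /=; case: (hF m).
have [[Lx cx] /= [hLx cx0 cxL hcx]] := getc x crx.
have [[Ly cy] /= [hLy cy0 cyL hcy]] := getc y cry.
pose xs := fun k : int => match k with Posz p => Fw Ly cy p | Negz p => Bw Lx cx p.+1 end.
have Bw0 : Bw Lx cx 0 = x by rewrite /Bw /= subn0 cxL.
have Fw0 : Fw Ly cy 0 = y by rewrite /Fw /= cy0.
have pxs : pseudo_orbit f d xs.
  case => [p|[|p]].
  - have -> : Posz p + 1 = Posz p.+1 by lia.
    apply: lt_le_trans (Fw_err hLy cy0 cyL hcy p) _.
    by apply: le_trans (rle _) _; rewrite ler_pdivrMr // ler_peMr // ?ler1n // ltW.
  - have -> : Negz 0 + 1 = 0 by lia.
    change (mdist (f (Bw Lx cx 1)) (Fw Ly cy 0) < d); rewrite Fw0.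
    apply: le_lt_trans (metric_triangle _ x _) _.
    have := Bw_err hLx cx0 cxL hcx 0; rewrite Bw0 => h1.
    have := rle (blk Lx 0).1; lra.
  - have -> : Negz p.+1 + 1 = Negz p by lia.
    apply: lt_le_trans (Bw_err hLx cx0 cxL hcx p.+1) _.
    by apply: le_trans (rle _) _; rewrite ler_pdivrMr // ler_peMr // ?ler1n // ltW.
have lxs : limit_pseudo_orbit f xs.
  move=> e' e'0.
  have [M hM] : exists M : nat, forall m, (M <= m)%N -> r m < e'.
    have hb0 : 0 <= d / 2 / e' by rewrite !divr_ge0 // ltW.
    exists (Num.bound (d / 2 / e')) => m hm.
    have := archi_boundP hb0; set B := Num.bound _ => hB.
    rewrite /r ltr_pdivrMr // ; rewrite ltr_pdivrMr // in hB.
    have : (B%:R <= m.+1%:R :> R) by rewrite ler_nat; lia.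
    nra.
  exists (maxn (Ssum Lx M) (Ssum Ly M)).+2.
  case => [p|[|p]] hk.
  - have -> : Posz p + 1 = Posz p.+1 by lia.
    apply: lt_trans (Fw_err hLy cy0 cyL hcy p) _.
    by apply: hM; apply: blk_large => //; move: hk => /=; lia.
  - by move: hk => /=; lia.
  - have -> : Negz p.+1 + 1 = Negz p by lia.
    apply: lt_trans (Bw_err hLx cx0 cxL hcx p.+1) _.
    by apply: hM; apply: blk_large => //; move: hk => /=; lia.
have [z [w [ow w0 hw]]] := Hd xs pxs lxs.
have [eta eta0 heta] := cont_eps cf x e0.
have [N1 hN1] := hw eta eta0.
have [N2 hN2] := hw e e0.
pose N := maxn N1 N2.
pose p := Ssum Lx N.+1.
have pN : (N.+1 <= p)%N by apply: Ssum_ge.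
pose q := Ssum Ly N.+1.
have qN : (N.+1 <= q)%N by apply: Ssum_ge.
have p0 : (0 < p)%N by lia.
have hp : xs (Negz p.-1) = x by rewrite /xs (prednK p0) (Bw_hit _ hLx cxL).
have hq : xs q = y by rewrite /xs (Fw_hit _ hLy cy0).
have wp : mdist x (w (Negz p.-1)) < eta.
  rewrite metric_sym -hp; apply: hN1 => /=; lia.
have wq : mdist (w q) y < e.
  rewrite -hq; apply: hN2 => /=; lia.
exists (p + q)%N, (fun i => if i == 0%N then x else if i == (p + q)%N then y
                            else w (i%:Z - p%:Z)); split.
- lia.
- by [].
- have -> : (p + q == 0)%N = false by lia.
  by rewrite eqxx.
- case => [|i] hi.
  + have -> : (1 == p + q)%N = false by lia.
    have -> : (1%:Z - p%:Z) = Negz p.-1 + 1 by lia.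
    by rewrite /= ow; apply: heta.
  + have -> : (i.+1 == 0)%N = false by [].
    have -> : (i.+1 == p + q)%N = false by lia.
    have -> : (i.+2 == 0)%N = false by [].
    have e1 : (i.+2)%:Z - p%:Z = ((i.+1)%:Z - p%:Z) + 1 by lia.
    case: eqP => h.
      rewrite -ow -e1.
      by have -> : (i.+2)%:Z - p%:Z = q%:Z by lia.
    by rewrite e1 ow mdistxx.
Qed.
End KL.

Fixpoint lstb (T : Type) (h : seq T -> T) (n : nat) : seq T :=
  match n with 0 => [::] | n'.+1 => rcons (lstb h n') (h (lstb h n')) end.

Section Net.
Context {R : realType} {X : metricType R}.

Lemma net_lemma : compact [set: X] -> forall r : R, 0 < r ->
  exists s : seq X, forall x, exists2 a, a \in s & mdist a x < r.
Proof.
move=> cpt r r0.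
case: (pselect (exists s : seq X, forall x, exists2 a, a \in s & mdist a x < r)) => // H.
exfalso.
have : forall s : seq X, exists x, forall a, a \in s -> r <= mdist a x.
  move=> s.
  have /existsNP [x hx] : ~ forall x, exists2 a, a \in s & mdist a x < r.
    by move=> h; apply: H; exists s.
  by exists x => a ains; rewrite leNgt; apply/negP => h; apply: hx; exists a.
move=> /choice [nx hnx].
pose pts n := nx (lstb nx n).
have mem : forall i n, (i < n)%N -> pts i \in lstb nx n.
  move=> i; elim=> [//|n IH] hi /=.
  rewrite mem_rcons in_cons; case: (ltnP i n) => h.
    by rewrite IH ?orbT.
  have -> : i = n by lia.
  by rewrite eqxx.
have sep : forall i n, (i < n)%N -> r <= mdist (pts i) (pts n).
  by move=> i n h; apply: hnx; apply: mem.
have [p hp] := cluster_seq pts cpt.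
have r2 : 0 < r / 2 by rewrite divr_gt0.
have [n1 [_ h1]] := hp _ r2 0%N.
have [n2 [h12 h2]] := hp _ r2 n1.+1.
have := sep n1 n2 h12.
have := metric_triangle (pts n1) p (pts n2).
rewrite metric_sym in h1.
lra.
Qed.
End Net.

Unset Implicit Arguments.
Theorem proposition3p1 (R : realType) (X : metricType R) (f : X -> X) :
  compact [set: X] -> homeomorphism f -> L_shadowing f ->
  shadowing f /\
  finite_set [set chain_recurrent_class f x | x in chain_recurrent_set f].
Proof.
move=> cpt [g [fg gf cf cg]] Lsh; split.
  exact: (Lsh_sh fg gf cpt cf cg Lsh).
have [d d0 Hd0] := Lsh 1 ltr01.
have Hd : forall xs, pseudo_orbit f d xs -> limit_pseudo_orbit f xs ->
    exists z, limit_shadows f z xs.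
  by move=> xs h1 h2; have [z [_ hz]] := Hd0 xs h1 h2; exists z.
have d4 : 0 < d / 4 by rewrite divr_gt0.
have [s hs] := net_lemma cpt d4.
have : forall a : X, exists c, (exists x, chain_recurrent f x /\ mdist a x < d / 4) ->
    chain_recurrent f c /\ mdist a c < d / 4.
  move=> a; case: (pselect (exists x, chain_recurrent f x /\ mdist a x < d / 4)).
    by move=> [x hx]; exists x.
  by move=> hn; exists a.
move=> /choice [pk hpk].
apply: (@sub_finite_set _ _ ((fun a => chain_recurrent_class f (pk a)) @` [set` s])).
  move=> _ [x crx <-].
  have [a ains ax] := hs x.
  have [crc ac] := hpk a (ex_intro _ x (conj crx ax)).
  exists a => //.
  have dd : mdist (pk a) x < d / 2.
    have := metric_triangle (pk a) a x.
    rewrite metric_sym in ac; lra.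
  apply: class_eq => e e0; split.
    exact: (KL cf d0 Hd crc crx dd e0).
  by apply: (KL cf d0 Hd crx crc _ e0); rewrite metric_sym.
exact: finite_image (finite_seq s).
Qed.
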